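(* For all non-negative integers $n,k,m$, $$\det\Big(C_{2n+2i+2j+4m-2}^{(2k+2m-1)}\Big)_{0\le i,j\le k-1}=\det\Big(C_{-2n-2i-2j}^{(2k+2m-1)}\Big)_{0\le i,j\le m-1},$$ where a $0\times0$ determinant equals $1$.
   Context: For $N\ge0$, $C_N^{(K)}$ is the number of lattice paths with steps $(1,1),(1,-1)$ from $(0,0)$ to $(N,0)$ never going below the $x$-axis nor above $y=K$. For odd $K$ the generating function $F(x)=\sum_{N\ge0}C_N^{(K)}x^N$ is a rational function $p/q$ with $\deg p<\deg q$, $q(0)\neq0$; $C_N^{(K)}$ for negative $N$ is defined by extending the associated linear recurrence backwards, equivalently $\sum_{N\ge1}C_{-N}^{(K)}x^N=-F(1/x)$. *)

(* Defs.v *)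
From HB Require Import structures.
From mathcomp Require Import all_boot all_order all_algebra.
Set Implicit Arguments. Unset Strict Implicit. Unset Printing Implicit Defensive.
Import Order.TTheory GRing.Theory Num.Theory.

(* A step sequence: true = (1,1), false = (1,-1).  [path_ok K h s] holds iff
   starting at height h, the path s never goes below 0 nor above K, and
   ends at height 0. *)
Fixpoint path_ok (K h : nat) (s : seq bool) : bool :=
  match s with
  | [::] => h == 0
  | b :: s' => if b then (h < K) && path_ok K h.+1 s'
               else (0 < h) && path_ok K h.-1 s'
  end.

Definition C (K N : nat) : nat :=
  #|[set t : N.-tuple bool | path_ok K 0 t]|.

Local Open Scope ring_scope.

(* [c] is the extension of (C_N^{(K)})_{N>=0} to all integers N obtained by
   running a linear recurrence with constant coefficients (nonzero leading and
   trailing coefficient) backwards.  Such an extension is unique. *)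
Definition Cext (K : nat) (c : int -> int) : Prop :=
  (forall N : nat, c N%:Z = (C K N)%:Z) /\
  exists (d : nat) (a : nat -> int),
    a 0%N != 0 /\ a d != 0 /\
    forall N : int, \sum_(i < d.+1) a i * c (N + (i : nat)%:Z) = 0.

(* Main.v *)
Require Import Defs.
From HB Require Import structures.
From mathcomp Require Import all_boot all_order all_algebra.
From mathcomp Require Import all_fingroup zify.
Set Implicit Arguments. Unset Strict Implicit. Unset Printing Implicit Defensive.
Import Order.TTheory GRing.Theory Num.Theory.
Fixpoint F (K N h : nat) : nat :=
  match N with
  | 0 => (h == 0)
  | N'.+1 => (if h < K then F K N' h.+1 else 0) + (if 0 < h then F K N' h.-1 else 0)
  end.

Lemma card_sum (T : finType) (P : pred T) : #|[set x | P x]| = \sum_x (P x : nat).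
Proof. by rewrite -sum1_card big_mkcond /=; apply: eq_bigr => x _; rewrite inE; case: (P x). Qed.

Lemma tuple_sum N (G : N.+1.-tuple bool -> nat) :
  \sum_(t : N.+1.-tuple bool) G t =
  \sum_(t : N.-tuple bool) (G [tuple of true :: t] + G [tuple of false :: t]).
Proof.
rewrite (reindex (fun p : bool * N.-tuple bool => [tuple of p.1 :: p.2])) /=.
  rewrite -(pair_big xpredT xpredT (fun b (t : N.-tuple bool) => G [tuple of b :: t])) /=.
  by rewrite big_bool /= big_split.
exists (fun t : N.+1.-tuple bool => (thead t, [tuple of behead t])).
  by move=> [b t] _; congr pair; apply: val_inj.
by move=> t _; rewrite /= -tuple_eta.
Qed.

Lemma cardF K N h : #|[set t : N.-tuple bool | path_ok K h t]| = F K N h.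
Proof.
rewrite card_sum; elim: N h => [|N IH] h.
  rewrite (big_pred1 [tuple]) //= => t; apply/esym/eqP; by rewrite [t]tuple0.
rewrite tuple_sum big_split /=.
case: (h < K); case: (0 < h); by rewrite /= -?IH ?big1_eq.
Qed.

Lemma F_small K N h : N < h -> F K N h = 0.
Proof.
elim: N h => [|N IH] h /= hN; first by case: h hN.
rewrite (IH h.+1) ?(IH h.-1); [by case: ifP; case: ifP| lia | lia].
Qed.

Lemma F_diag K N : N <= K -> F K N N = 1.
Proof.
elim: N => [|N IH] //= hN.
rewrite F_small ?IH; [by case: ifP| lia | lia].
Qed.

Lemma F_par K N h : odd (N + h) -> F K N h = 0.
Proof.
elim: N h => [|N IH] h /=; first by case: h.
case: h => [|h] hp.
  by rewrite IH ?if_same //= addn1 /=; move: hp; rewrite addn0.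
rewrite (IH h.+2) ?(IH h) ?if_same //.
- by move: hp; rewrite addnS /= negbK.
- by move: hp; rewrite !addnS /= negbK.
Qed.

Lemma FS K N h : F K N.+1 h = (if h < K then F K N h.+1 else 0) + (if 0 < h then F K N h.-1 else 0).
Proof. by []. Qed.

Lemma F2 d N i : i < d -> F (2 * d).-1 N.+2 (2 * i) =
  (if i.+1 < d then F (2 * d).-1 N (2 * i).+2 else 0) + F (2 * d).-1 N (2 * i)
  + (if i is i'.+1 then F (2 * d).-1 N (2 * i') + F (2 * d).-1 N (2 * i) else 0).
Proof.
move=> hi; rewrite !FS.
have -> : 2 * i < (2 * d).-1 by lia.
have -> : ((2*i).+1 < (2*d).-1) = (i.+1 < d) by apply/idP/idP; lia.
have -> : 0 < (2 * i).+1 by [].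
case: i hi => [|i] hi.
  by rewrite addn0 /=.
have -> : 0 < 2 * i.+1 by lia.
have -> : (2 * i.+1).-1 < (2 * d).-1 by lia.
have -> : 0 < (2 * i.+1).-1 by lia.
have -> : (2*i.+1).-1.-1 = 2 * i by lia.
have -> : (2*i.+1).-1.+1 = 2 * i.+1 by lia.
by rewrite (addnC (F _ N (2 * i))).
Qed.

Local Open Scope ring_scope.

Definition at_ d (v : 'cV[int]_d) (r : nat) : int :=
  if @insub nat (fun x => x < d)%N 'I_d r is Some o then v o 0 else 0.

Lemma at_ord d (v : 'cV[int]_d) (o : 'I_d) : at_ v o = v o 0.
Proof. by rewrite /at_ valK. Qed.

Lemma at_out d (v : 'cV[int]_d) r : (d <= r)%N -> at_ v r = 0.
Proof. by move=> h; rewrite /at_ insubF // ltnNge h. Qed.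

Lemma sum_nat d (G : 'I_d -> int) r :
  \sum_(l : 'I_d) ((l : nat) == r)%:R * G l =
  if @insub nat (fun x => x < d)%N 'I_d r is Some o then G o else 0.
Proof.
case: insubP => [o _ ho|hr].
  rewrite (bigD1 o) //= ho eqxx mul1r big1 ?addr0 // => l hl.
  by rewrite -ho (inj_eq val_inj) (negbTE hl) mul0r.
rewrite big1 // => l _; case: eqP => [hl|]; last by rewrite mul0r.
by move: hr; rewrite -hl ltn_ord.
Qed.

Lemma sum_at d (v : 'cV[int]_d) r :
  \sum_(l : 'I_d) ((l : nat) == r)%:R * v l 0 = at_ v r.
Proof. by rewrite sum_nat. Qed.

Definition Sm d : 'M[int]_d := \matrix_(i, j) ((i : nat) == j.+1)%:R.

Lemma S_at d (v : 'cV[int]_d) (i : 'I_d) :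
  (Sm d *m v) i 0 = if (i : nat) is i'.+1 then at_ v i' else 0.
Proof.
rewrite mxE; case: i => [[|i] hi] /=.
  by rewrite big1 // => l _; rewrite mxE mul0r.
by rewrite -sum_at; apply: eq_bigr => l _; rewrite mxE /= eqSS eq_sym.
Qed.

Lemma St_at d (v : 'cV[int]_d) (i : 'I_d) : ((Sm d)^T *m v) i 0 = at_ v i.+1.
Proof.
rewrite mxE -sum_at; apply: eq_bigr => l _; by rewrite !mxE.
Qed.

Definition Lm d : 'M[int]_d := 1 + Sm d.
Definition Bm d : 'M[int]_d := Lm d * (Lm d)^T.

Lemma L_at d (v : 'cV[int]_d) (i : 'I_d) :
  (Lm d *m v) i 0 = v i 0 + if (i : nat) is i'.+1 then at_ v i' else 0.
Proof. by rewrite /Lm mulmxDl mul1mx mxE S_at. Qed.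

Lemma LT_at d (v : 'cV[int]_d) (i : 'I_d) :
  ((Lm d)^T *m v) i 0 = v i 0 + at_ v i.+1.
Proof. by rewrite /Lm linearD /= trmx1 mulmxDl mul1mx mxE St_at. Qed.

Lemma at_LT d (v : 'cV[int]_d) r :
  at_ ((Lm d)^T *m v) r = if (r < d)%N then at_ v r + at_ v r.+1 else 0.
Proof.
case: (ltnP r d) => hr; last by rewrite at_out.
by rewrite -[r]/(val (Ordinal hr)) at_ord LT_at at_ord.
Qed.

Lemma B_at d (v : 'cV[int]_d) (i : 'I_d) :
  (Bm d *m v) i 0 = at_ v i + at_ v i.+1 +
    if (i : nat) is i'.+1 then at_ v i' + at_ v i else 0.
Proof.
rewrite /Bm -mulmxE -mulmxA L_at LT_at at_ord.
case: i => [[|i] hi] //=; rewrite at_LT (ltn_trans _ hi) //.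
by rewrite -(at_ord v (Ordinal hi)).
Qed.

Definition e0 d : 'cV[int]_d := \col_(i < d) ((i : nat) == 0%N)%:R.

Lemma at_col d (g : nat -> int) r : at_ (\col_(i < d) g i) r = if (r < d)%N then g r else 0.
Proof.
case: (ltnP r d) => hr; last by rewrite at_out.
by rewrite -[r]/(val (Ordinal hr)) at_ord mxE.
Qed.

Lemma BN_F d N : Bm d ^+ N *m e0 d = \col_(i < d) (F (2 * d)%N.-1 (2 * N)%N (2 * i)%N)%:Z.
Proof.
elim: N => [|N IH].
  rewrite expr0 mul1mx; apply/matrixP => i j; rewrite !mxE /=.
  by case: (nat_of_ord i).
rewrite exprS -mulmxE -mulmxA IH; apply/matrixP => i j; rewrite ord1 B_at.
rewrite !(@at_col d (fun r => (F (2 * d)%N.-1 (2 * N)%N (2 * r)%N)%:Z)) !mxE ltn_ord.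
have -> : (2 * N.+1 = (2 * N).+2)%N by lia.
rewrite F2 // !PoszD.
case: i => [[|i] hi] /=.
  case: ifP => _; rewrite /= ?addr0 ?add0r //; exact: addrC.
have hi' : (i < d)%N by lia.
rewrite -[X in at_ _ X]/(val (Ordinal hi')) at_ord mxE /=.
have -> : (2 * i.+2 = (2 * i.+1).+2)%N by lia.
rewrite PoszD; congr (_ + _); rewrite addrC; congr (_ + _); by case: ifP.
Qed.

Lemma trB d : (Bm d)^T = Bm d.
Proof. by rewrite /Bm -mulmxE trmx_mul trmxK. Qed.

Lemma trBX d n : (Bm d ^+ n)^T = Bm d ^+ n.
Proof.
elim: n => [|n IH]; first by rewrite !expr0 trmx1.
by rewrite exprS -mulmxE trmx_mul IH trB !mulmxE -exprSr exprS.
Qed.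

Lemma u_entry d j (r : 'I_d) : (Bm d ^+ j *m e0 d) r 0 = (F (2 * d)%N.-1 (2 * j)%N (2 * r)%N)%:Z.
Proof. by rewrite BN_F mxE. Qed.

Lemma u_low d j (r : 'I_d) : (j < r)%N -> (Bm d ^+ j *m e0 d) r 0 = 0.
Proof. by move=> h; rewrite u_entry F_small //; lia. Qed.

Lemma u_diag d j (r : 'I_d) : (r : nat) = j -> (Bm d ^+ j *m e0 d) r 0 = 1.
Proof. move=> h; rewrite u_entry -h F_diag //; have := ltn_ord r; lia. Qed.

Lemma krylov_zero d (v : 'cV[int]_d) :
  (forall j, (j < d)%N -> ((e0 d)^T *m Bm d ^+ j *m v) 0 0 = 0) -> v = 0.
Proof.
move=> H; apply/matrixP => r c; rewrite ord1 mxE.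
suff HS : forall j (r : 'I_d), nat_of_ord r = j -> v r 0 = 0 by exact: HS.
elim/ltn_ind => j IH {}r hr.
have := H j; rewrite -hr ltn_ord => /(_ isT).
rewrite -(trBX d r) -trmx_mul mxE (bigD1 r) //= big1 ?addr0.
  by rewrite mxE u_diag // mul1r.
move=> l hl; rewrite mxE.
case: (ltngtP l r) => hlr.
- by rewrite (IH l) ?mulr0 // -hr.
- by rewrite u_low ?mul0r // -hr.
- by move: hl; rewrite (val_inj hlr) eqxx.
Qed.

Local Open Scope ring_scope.

Lemma SX d t (i j : 'I_d) : (Sm d ^+ t) i j = ((i : nat) == j + t)%N%:R.
Proof.
elim: t i j => [|t IH] i j.
  by rewrite expr0 mxE addn0 (inj_eq val_inj).
rewrite exprSr -mulmxE mxE.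
rewrite (eq_bigr (fun l : 'I_d => ((l : nat) == j.+1)%:R * ((i:nat) == l + t)%N%:R)); last first.
  by move=> l _; rewrite IH mxE mulrC.
rewrite (sum_nat (fun l => ((i:nat) == l + t)%N%:R)).
case: insubP => [o _ ->|hj]; first by rewrite addnS addSn.
case: eqP => // hi; move: hj (ltn_ord i); rewrite hi; lia.
Qed.

Lemma SXd d : Sm d ^+ d = 0.
Proof.
apply/matrixP => i j; rewrite SX mxE; case: eqP => // h.
by have := ltn_ord i; rewrite h; lia.
Qed.

Definition Li d : 'M[int]_d := \sum_(t < d) (- Sm d) ^+ t.

Lemma LLi d : Lm d * Li d = 1.
Proof.
suff H : forall n, Lm d * \sum_(t < n) (- Sm d) ^+ t = 1 - (- Sm d) ^+ n.
  by rewrite /Li H exprNn SXd mulr0 subr0.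
elim=> [|n IH]; first by rewrite big_ord0 mulr0 expr0 subrr.
rewrite big_ord_recr /= mulrDr IH /Lm.
rewrite mulrDl mul1r (exprS (- Sm d) n) mulNr.
by rewrite opprK addrA subrK.
Qed.

Lemma LiL d : Li d * Lm d = 1.
Proof.
suff H : forall n, (\sum_(t < n) (- Sm d) ^+ t) * Lm d = 1 - (- Sm d) ^+ n.
  by rewrite /Li H exprNn SXd mulr0 subr0.
elim=> [|n IH]; first by rewrite big_ord0 mul0r expr0 subrr.
rewrite big_ord_recr /= mulrDl IH /Lm.
rewrite mulrDr mulr1 (exprSr (- Sm d) n) mulrN.
by rewrite opprK addrA subrK.
Qed.

Definition Bi d : 'M[int]_d := (Li d)^T * Li d.

Lemma trM d (A B : 'M[int]_d) : (A * B)^T = B^T * A^T.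
Proof. by rewrite -!mulmxE trmx_mul. Qed.

Lemma BBi d : Bm d * Bi d = 1.
Proof.
rewrite /Bm /Bi -mulrA (mulrA (Lm d)^T) -trM LiL trmx1 mul1r; exact: LLi.
Qed.

Lemma BiB d : Bi d * Bm d = 1.
Proof.
rewrite /Bm /Bi -mulrA (mulrA (Li d)) LiL mul1r -trM LLi; exact: trmx1.
Qed.

Lemma commBBi d : GRing.comm (Bm d) (Bi d).
Proof. by rewrite /GRing.comm BBi BiB. Qed.

Definition Pm d (z : int) : 'M[int]_d :=
  match z with Posz n => Bm d ^+ n | Negz n => Bi d ^+ n.+1 end.

Lemma PmS d z : Pm d (z + 1) = Bm d * Pm d z.
Proof.
case: z => [n|n] /=.
  by rewrite addn1 exprS.
case: n => [|n] /=; first by rewrite expr1 BBi.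
by rewrite subn1 /= [in RHS]exprS mulrA BBi mul1r.
Qed.

Lemma PmSr d z : Pm d (z + 1) = Pm d z * Bm d.
Proof.
rewrite PmS; case: z => [n|n] /=; first by rewrite -exprS exprSr.
apply: commrX; exact: commBBi.
Qed.

Lemma Pm_addn d z n : Pm d (z + n%:Z) = Pm d z * Bm d ^+ n.
Proof.
elim: n => [|n IH]; first by rewrite addr0 expr0 mulr1.
by rewrite exprSr -addn1 PoszD addrA PmSr IH mulrA.
Qed.

Lemma Pm_addnl d z n : Pm d (z + n%:Z) = Bm d ^+ n * Pm d z.
Proof.
elim: n => [|n IH]; first by rewrite addr0 expr0 mul1r.
by rewrite exprS -addn1 PoszD addrA PmS IH mulrA.
Qed.

Lemma Pm_opp d z : Pm d z * Pm d (- z) = 1.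
Proof.
case: z => [[|n]|n] /=; first by rewrite expr0 mulr1.
  by rewrite -exprMn_comm ?BBi ?expr1n //; exact: commBBi.
by rewrite -exprMn_comm ?BiB ?expr1n //; apply/esym; exact: commBBi.
Qed.

Lemma det_L d : \det (Lm d) = 1.
Proof.
rewrite det_trig; last first.
  apply/is_trig_mxP => i j hij; rewrite /Lm !mxE.
  case: eqP => [e|_]; first by move: hij; rewrite e ltnn.
  by case: eqP => // h; move: hij; rewrite h; lia.
rewrite big1 // => i _; rewrite /Lm !mxE eqxx.
by case: eqP => //; lia.
Qed.

Lemma det_Li d : \det (Li d) = 1.
Proof. by have := det_mulmx (Lm d) (Li d); rewrite mulmxE LLi det1 det_L mul1r. Qed.

Lemma det_B d : \det (Bm d) = 1.
Proof. by rewrite /Bm -mulmxE det_mulmx det_tr det_L mulr1. Qed.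

Lemma det_Bi d : \det (Bi d) = 1.
Proof. by rewrite /Bi -mulmxE det_mulmx det_tr det_Li mulr1. Qed.

Lemma det_X d (A : 'M[int]_d) n : \det A = 1 -> \det (A ^+ n) = 1.
Proof.
move=> h; elim: n => [|n IH]; first by rewrite expr0 det1.
by rewrite exprS -mulmxE det_mulmx h IH mulr1.
Qed.

Lemma det_Pm d z : \det (Pm d z) = 1.
Proof. by case: z => n /=; apply: det_X; [exact: det_B | exact: det_Bi]. Qed.

Lemma det_rev p (A : 'M[int]_p) :
  \det (\matrix_(i, j) A (rev_ord i) (rev_ord j)) = \det A.
Proof.
pose s : 'S_p := perm (@rev_ord_inj p).
have -> : \matrix_(i, j) A (rev_ord i) (rev_ord j) = row_perm s (col_perm s A).
  by apply/matrixP => i j; rewrite !mxE !permE.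
rewrite row_permE col_permE !det_mulmx !det_perm odd_permV.
by rewrite mulrC -mulrA -signr_addb addbb mulr1.
Qed.

Lemma jacobi k m (X Y : 'M[int]_(k + m)) : X * Y = 1 ->
  \det (ulsubmx X) = \det X * \det (drsubmx Y).
Proof.
move=> hXY.
have E : X *m block_mx 1%:M (ursubmx Y) 0 (drsubmx Y) = block_mx (ulsubmx X) 0 (dlsubmx X) 1%:M.
  have H1 : X *m Y = block_mx 1%:M 0 0 1%:M by rewrite mulmxE hXY -scalar_mx_block.
  move: H1; rewrite -{1}(submxK X) -{1}(submxK Y) !mulmx_block => /eq_block_mx [_ h12 _ h22].
  rewrite -{1}(submxK X) mulmx_block !mulmx0 !mulmx1 !addr0 h12 h22.
  by [].
have := congr1 determinant E.
by rewrite det_mulmx det_ublock det_lblock det1 mul1r det1 mulr1 => <-.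
Qed.

Definition subm p d (h : (p <= d)%N) (X : 'M[int]_d) : 'M[int]_p :=
  \matrix_(i, j) X (widen_ord h i) (widen_ord h j).

Lemma sum_widen p d (h : (p <= d)%N) (G : 'I_d -> int) :
  (forall r : 'I_d, (p <= r)%N -> G r = 0) ->
  \sum_(r < d) G r = \sum_(r < p) G (widen_ord h r).
Proof.
move=> H; rewrite (bigID (fun r : 'I_d => (r < p)%N)) /= [X in _ + X]big1 ?addr0.
  by rewrite -(big_ord_narrow_cond (P := xpredT)).
by move=> r; rewrite -leqNgt; exact: H.
Qed.

Definition lowtri d (A : 'M[int]_d) := forall i j : 'I_d, (i < j)%N -> A i j = 0.

Lemma subm_conj p d (h : (p <= d)%N) (A X : 'M[int]_d) : lowtri A ->
  subm h (A * X * A^T) = subm h A * subm h X * (subm h A)^T.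
Proof.
move=> hA; apply/matrixP => i j; rewrite -!mulmxE !mxE.
rewrite (sum_widen h); last first.
  by move=> r hr; rewrite !mxE hA ?mulr0 //; apply: (leq_trans (ltn_ord j)).
apply: eq_bigr => b _; rewrite !mxE; congr (_ * _).
rewrite (sum_widen h); last first.
  by move=> r hr; rewrite hA ?mul0r //; apply: (leq_trans (ltn_ord i)).
by apply: eq_bigr => a _; rewrite !mxE.
Qed.

Lemma det_subm_conj p d (h : (p <= d)%N) (A X : 'M[int]_d) : lowtri A ->
  (forall i : 'I_d, A i i = 1) ->
  \det (subm h (A * X * A^T)) = \det (subm h X).
Proof.
move=> hA hd; rewrite subm_conj // -!mulmxE !det_mulmx det_tr.
have -> : \det (subm h A) = 1.
  rewrite det_trig; last by apply/is_trig_mxP => i j hij; rewrite mxE hA.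
  by rewrite big1 // => i _; rewrite mxE hd.
by rewrite mul1r mulr1.
Qed.

Lemma NSX d t (i j : 'I_d) : ((- Sm d) ^+ t) i j = (-1) ^+ t * (Sm d ^+ t) i j.
Proof.
elim: t i j => [|t IH] i j; first by rewrite !expr0 mul1r.
rewrite !exprSr mulrN -!mulmxE !mxE mulrN1 mulNr; congr (- _).
rewrite mulr_sumr; apply: eq_bigr => l _.
by rewrite IH mulrA.
Qed.

Lemma Li_entry d (i j : 'I_d) : Li d i j = \sum_(t < d) (-1) ^+ t * ((i : nat) == j + t)%N%:R.
Proof. by rewrite /Li summxE; apply: eq_bigr => t _; rewrite NSX SX. Qed.

Lemma Li_low d : lowtri (Li d).
Proof.
move=> i j hij; rewrite Li_entry big1 // => t _.
by case: eqP => [h|_]; [move: hij; rewrite h; lia | rewrite mulr0].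
Qed.

Lemma Li_diag d (i : 'I_d) : Li d i i = 1.
Proof.
rewrite Li_entry (eq_bigr (fun t : 'I_d => ((t : nat) == 0%N)%:R * (-1) ^+ t)).
  rewrite (sum_nat (fun t : 'I_d => (-1) ^+ t)); case: insubP => [o _ ->|] //.
  by have := ltn_ord i; lia.
move=> t _; rewrite mulrC; congr (_ * _); congr (_%:R).
by apply/eqP/eqP; lia.
Qed.

Definition Um d : 'M[int]_d := \matrix_(r, j) (Bm d ^+ j *m e0 d) r 0.

Lemma Um_entry d (r j : 'I_d) : Um d r j = (Bm d ^+ j *m e0 d) r 0.
Proof. by rewrite [LHS]mxE. Qed.

Lemma UT_low d : lowtri (Um d)^T.
Proof. by move=> i j hij; rewrite [LHS]mxE Um_entry u_low. Qed.

Lemma UT_diag d (i : 'I_d) : (Um d)^T i i = 1.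
Proof. by rewrite [LHS]mxE Um_entry u_diag. Qed.

Lemma gram d (X : 'M[int]_d) (i j : 'I_d) :
  ((Bm d ^+ i *m e0 d)^T *m X *m (Bm d ^+ j *m e0 d)) 0 0 = ((Um d)^T * X * ((Um d)^T)^T) i j.
Proof.
rewrite trmxK -!mulmxE !mxE; apply: eq_bigr => b _; rewrite Um_entry; congr (_ * _).
rewrite !mxE; apply: eq_bigr => a _; by rewrite [in RHS]mxE Um_entry mxE.
Qed.

Definition rv d (X : 'M[int]_d) : 'M[int]_d := \matrix_(i, j) X (rev_ord i) (rev_ord j).

Lemma rvM d (X Y : 'M[int]_d) : rv (X * Y) = rv X * rv Y.
Proof.
apply/matrixP => i j; rewrite -!mulmxE !mxE.
rewrite (reindex_inj rev_ord_inj) /=; apply: eq_bigr => l _.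
by rewrite !mxE.
Qed.

Lemma rv1 d : rv (1 : 'M[int]_d) = 1.
Proof. by apply/matrixP => i j; rewrite !mxE (inj_eq rev_ord_inj). Qed.

Lemma rvT d (X : 'M[int]_d) : rv X^T = (rv X)^T.
Proof. by apply/matrixP => i j; rewrite !mxE. Qed.

Lemma rvX d (X : 'M[int]_d) n : rv (X ^+ n) = (rv X) ^+ n.
Proof. elim: n => [|n IH]; first by rewrite !expr0 rv1. by rewrite !exprS rvM IH. Qed.

Lemma rvLT d : rv (Lm d)^T = Lm d.
Proof.
apply/matrixP => i j; rewrite /Lm !mxE /=.
have hi := ltn_ord i; have hj := ltn_ord j.
congr (_ + _).
  by congr (_%:R); rewrite (inj_eq rev_ord_inj) eq_sym.
have -> : ((d - j.+1)%N == (d - i.+1).+1) = (nat_of_ord i == j.+1) by apply/idP/idP => /eqP h; apply/eqP; lia.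
by [].
Qed.

Lemma rvL d : rv (Lm d) = (Lm d)^T.
Proof. by rewrite -{1}(trmxK (Lm d)) rvT rvLT. Qed.

Lemma rvLiT d : rv (Li d)^T = Li d.
Proof.
have h : rv (Li d)^T * Lm d = 1.
  by rewrite -rvLT -rvM -trM LLi trmx1 rv1.
by rewrite -[LHS]mulr1 -(LLi d) mulrA h mul1r.
Qed.

Lemma rvLi d : rv (Li d) = (Li d)^T.
Proof. by rewrite -{1}(trmxK (Li d)) rvT rvLiT. Qed.

Lemma conjX d (X : 'M[int]_d) n : (Li d * X * Lm d) ^+ n = Li d * X ^+ n * Lm d.
Proof.
elim: n => [|n IH]; first by rewrite !expr0 mulr1 LiL.
by rewrite exprS IH !mulrA -(mulrA _ (Lm d)) LLi mulr1 exprS !mulrA.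
Qed.

Lemma rvPm d z : rv (Pm d z) = Li d * Pm d z * Lm d.
Proof.
case: z => n /=.
  rewrite rvX /Bm rvM rvL rvLT -conjX; congr (_ ^+ _).
  by rewrite !mulrA LiL mul1r.
rewrite rvX /Bi rvM rvLi rvLiT -conjX; congr (_ ^+ _).
by rewrite -!mulrA LiL mulr1.
Qed.

Lemma rvPm' d z : rv (Pm d z) = Li d * Pm d (z + 1) * (Li d)^T.
Proof.
rewrite rvPm PmSr /Bm !mulrA -(mulrA _ (Lm d)^T) -trM LiL trmx1 mulr1 //.
Qed.

Definition qv d (w : int) : int := ((e0 d)^T *m Pm d w *m e0 d) 0 0.
Definition cx d (z : int) : int := if (z %% 2 == 0)%Z then qv d (z %/ 2)%Z else 0.

Lemma cx_2r d w (r : nat) : (r < 2)%N -> cx d (w * 2 + r%:Z) = if r == 0%N then qv d w else 0.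
Proof.
move=> hr; rewrite /cx modzMDl divzMDl //.
by case: r hr => [|[|]] //= _; rewrite addr0.
Qed.

Lemma int_split (z : int) : exists w (r : nat), (r < 2)%N /\ z = w * 2 + r%:Z.
Proof.
exists (z %/ 2)%Z, `|(z %% 2)%Z|%N; split.
  have h1 := modz_ge0 z (isT : (2 : int) != 0); have h2 := ltz_pmod z (isT : (0 : int) < 2).
  lia.
have h1 := modz_ge0 z (isT : (2 : int) != 0).
by rewrite gez0_abs // -divz_eq.
Qed.

Lemma e0T_at d (v : 'cV[int]_d) (o : 'I_d) : (o : nat) = 0%N -> ((e0 d)^T *m v) 0 0 = v o 0.
Proof.
move=> ho; rewrite mxE (bigD1 o) //= big1 ?addr0.
  by rewrite !mxE ho mul1r.
by move=> l hl; rewrite !mxE; case: eqP => [h|]; [case/eqP: hl; apply: val_inj; rewrite /= h ho | rewrite mul0r].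
Qed.

Lemma cx_nat d (hd : (0 < d)%N) (N : nat) : cx d N%:Z = (C (2 * d).-1 N)%:Z.
Proof.
rewrite /C cardF.
have -> : N%:Z = (N./2)%:Z * 2 + (odd N)%:Z.
  by rewrite -PoszM -PoszD muln2 addnC odd_double_half.
rewrite cx_2r; last by case: (odd N).
case: (boolP (odd N)) => ho /=.
  by rewrite F_par // addn0.
rewrite /qv /= -mulmxA (@e0T_at _ _ (Ordinal hd)) // BN_F mxE /=.
rewrite muln0; congr (Posz (F _ _ _)).
by rewrite -{2}(odd_double_half N) (negbTE ho) add0n mul2n.
Qed.

Lemma Cext_even d (hd : (0 < d)%N) c : Cext (2 * d).-1 c -> forall w, c (w * 2) = qv d w.
Proof.
case=> hC [D [a [ha0 [_ hrec]]]].
pose G z := \sum_(i < D.+1) a i * cx d (z + (i : nat)%:Z).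
have G_nat : forall N : nat, G N%:Z = 0.
  move=> N; rewrite -(hrec N%:Z); apply: eq_bigr => i _.
  by rewrite -PoszD cx_nat // hC.
pose x (r : nat) (i : nat) : 'cV[int]_d := if odd (r + i) then 0 else Bm d ^+ (r + i)./2 *m e0 d.
pose v r := \sum_(i < D.+1) a i *: x r i.
have G_v : forall w (r : nat), (r < 2)%N -> G (w * 2 + r%:Z) = ((e0 d)^T *m Pm d w *m v r) 0 0.
  move=> w r hr; rewrite /v mulmx_sumr summxE; apply: eq_bigr => i _.
  rewrite -scalemxAr mxE; congr (_ * _).
  have -> : w * 2 + r%:Z + (i : nat)%:Z = (w + ((r + i)./2)%:Z) * 2 + (odd (r + i))%:Z.
    have := odd_double_half (r + i); rewrite -muln2 => h; lia.
  rewrite cx_2r; last by case: odd.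
  rewrite /x; case: (odd (r + i)) => /=; first by rewrite mulmx0 mxE.
  by rewrite /qv Pm_addn -mulmxE !mulmxA.
have v0 : forall r, (r < 2)%N -> v r = 0.
  move=> r hr; apply: krylov_zero => j hj.
  have := G_v j%:Z r hr; rewrite /= => <-.
  have -> : j%:Z * 2 + r%:Z = (j * 2 + r)%N%:Z by lia.
  exact: G_nat.
have G0 : forall z, G z = 0.
  move=> z; have [w [r [hr ->]]] := int_split z.
  by rewrite G_v // v0 // mulmx0 mxE.
suff E : forall (n : nat) (z : int), - (n%:Z) <= z -> c z = cx d z.
  move=> w; rewrite (E (2 * `|w|)%N); last by lia.
  by have := @cx_2r d w 0%N isT; rewrite addr0.
elim=> [|n IH] z hz.
  have -> : z = `|z|%N%:Z by lia.
  by rewrite hC cx_nat.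
case: (boolP (- (n%:Z) <= z)) => hz'; first exact: IH.
have hz2 : z = - (n.+1)%:Z by lia.
have := hrec z; have := G0 z; rewrite /G => h1 h2.
have : \sum_(i < D.+1) a i * (c (z + (i : nat)%:Z) - cx d (z + (i : nat)%:Z)) = 0.
  by rewrite (eq_bigr (fun i : 'I_D.+1 => a i * c (z + (i:nat)%:Z) - a i * cx d (z + (i:nat)%:Z)));
    [rewrite sumrB h1 h2 subrr | move=> i _; rewrite mulrBr].
rewrite big_ord_recl /= big1 ?addr0 => [|i _]; last first.
  by rewrite IH ?subrr ?mulr0 //; rewrite /bump /=; lia.
move/eqP; rewrite mulf_eq0 (negbTE ha0) /= subr_eq0 ?addr0 => /eqP.
done.
Qed.

Lemma gram_det d p (h : (p <= d)%N) c (Ev : forall w, c (w * 2) = qv d w) (z : int)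
  (f : 'I_p -> 'I_p -> int) :
  (forall i j : 'I_p, f i j = c ((z + (i : nat)%:Z + (j : nat)%:Z) * 2)) ->
  \det (\matrix_(i, j) f i j) = \det (subm h (Pm d z)).
Proof.
move=> hf.
have -> : \matrix_(i, j) f i j = subm h ((Um d)^T * Pm d z * ((Um d)^T)^T).
  apply/matrixP => i j; rewrite [LHS]mxE [RHS]mxE hf Ev -gram /qv.
  rewrite Pm_addn Pm_addnl /=.
  by rewrite trmx_mul trBX -!mulmxE !mulmxA.
rewrite det_subm_conj //; [exact: UT_low | exact: UT_diag].
Qed.

Unset Implicit Arguments.

Theorem theorem15 (n k m : nat) (c : int -> int) :
  Cext (2 * k + 2 * m).-1 c ->
  \det (\matrix_(i < k, j < k)
          c (2 * (n + i + j + 2 * m)%N%:Z - 2)) =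
  \det (\matrix_(i < m, j < m)
          c (- (2 * (n + i + j)%N%:Z))).
Proof.
move=> hC.
case: (posnP (k + m)) => hd.
  have hk : k = 0%N by lia. have hm : m = 0%N by lia.
  by subst k m; rewrite !det_mx00.
have hK : Cext (2 * (k + m))%N.-1 c.
  by have -> : (2 * (k + m))%N = (2 * k + 2 * m)%N by lia.
have Ev := Cext_even hd hK.
pose z0 : int := (n + 2 * m)%N%:Z - 1.
have hk : (k <= k + m)%N by exact: leq_addr.
have hm : (m <= k + m)%N by exact: leq_addl.
rewrite (gram_det hk Ev (z := z0)); last by move=> i j; congr c; rewrite /z0; lia.
have -> : subm hk (Pm (k + m) z0) = ulsubmx (Pm (k + m) z0).
  by apply/matrixP => i j; rewrite !mxE; congr (Pm _ _ _ _); apply: val_inj.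
rewrite (jacobi (Pm_opp (k + m) z0)) det_Pm mul1r -det_rev.
have -> : \matrix_(i, j) drsubmx (Pm (k + m) (- z0)) (rev_ord i) (rev_ord j) =
    subm hm (rv (Pm (k + m) (- z0))).
  apply/matrixP => i j; rewrite !mxE; congr (Pm _ _ _ _); apply: val_inj => /=;
  have := ltn_ord i; have := ltn_ord j; lia.
rewrite rvPm' det_subm_conj; [|exact: Li_low|exact: Li_diag].
rewrite -[RHS]det_rev (gram_det hm Ev (z := - z0 + 1)) //.
move=> i j; rewrite !mxE; congr c; rewrite /z0 /=.
have := ltn_ord i; have := ltn_ord j; lia.
Qed.
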